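(* Let $C\subseteq 2^X$ be an ample class and $r:C\to X(C)$ a representation map. Then: (C1) for every $c\in C$, the cube of $2^X$ with support $r(c)$ that contains $c$ is contained in $C$ (i.e. all out-neighbours of $c$ under $o_r$ belong to a cube of $C$); (C2) for every cube $B$ of $C$, there is a unique $c\in B$ with $r(c)\cap\mathrm{supp}(B)=\varnothing$, i.e. $c$ is the unique sink of $o_r$ restricted to the edges of $B$; consequently $o_r$ is a unique sink orientation on each cube of $C$.
   Context: $X$ is finite; concepts are identified with characteristic functions; $C|Y=\{c|Y:c\in C\}$; $Y$ is shattered by $C$ if $C|Y=2^Y$. A cube of $2^X$ is $\{T\cup Z:Z\subseteq Y\}$, $Y\subseteq X$, $T\subseteq X\setminus Y$, support $\mathrm{supp}=Y$; a cube of $C$ is one contained in $C$. $C$ is ample if every shattered set is the support of a cube of $C$; $X(C)$ is the family of shattered sets. A representation map is a bijection $r:C\to X(C)$ with $c|(r(c)\cup r(c'))\ne c'|(r(c)\cup r(c'))$ for all distinct $c,c'$. For a representation map and any two concepts $c,c'\in C$ with $c\Delta c'=\{x\}$, one has $r(c)\Delta r(c')=\{x\}$; the orientation $o_r$ of the graph $G(C)$ (edges between concepts at Hamming distance 1) orients such an edge from $c$ to $c'$ iff $x\in r(c)\setminus r(c')$. An orientation of a cube is a unique sink orientation if every subcube has exactly one sink (vertex with no outgoing edge inside that subcube). *)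

(* Defs.v *)
From mathcomp Require Import all_boot.
Set Implicit Arguments. Unset Strict Implicit. Unset Printing Implicit Defensive.

Section Defs.
Variable X : finType.
Implicit Types (C : {set {set X}}) (c Y T : {set X}).

Definition restr c Y : {set X} := c :&: Y.

Definition shattered C Y : bool := [set restr c Y | c in C] == powerset Y.

(* the cube {T ∪ Z : Z ⊆ Y} of 2^X (T is meant to be disjoint from Y) *)
Definition cube T Y : {set {set X}} := [set T :|: Z | Z in powerset Y].

Definition is_cube T Y : bool := [disjoint T & Y].

Definition cube_of C T Y : bool := is_cube T Y && (cube T Y \subset C).

Definition ample C : Prop :=
  forall Y, shattered C Y -> exists T, cube_of C T Y.

Definition shattered_sets C : {set {set X}} := [set Y | shattered C Y].

Definition representation_map C (r : {set X} -> {set X}) : Prop :=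
  [/\ {in C &, injective r},
      r @: C = shattered_sets C &
      {in C &, forall c c', c != c' ->
          restr c (r c :|: r c') != restr c' (r c :|: r c')}].

Definition oriented (r : {set X} -> {set X}) c c' : Prop :=
  exists x, (c :\: c') :|: (c' :\: c) = [set x] /\ x \in r c :\: r c'.

Definition sink (r : {set X} -> {set X}) (B : {set {set X}}) c : Prop :=
  c \in B /\ forall c', c' \in B -> ~ oriented r c c'.

Definition USO_on (r : {set X} -> {set X}) T Y : Prop :=
  forall T' Y', is_cube T' Y' -> cube T' Y' \subset cube T Y ->
    exists! c, sink r (cube T' Y') c.

End Defs.

(* Main.v *)
Require Import Defs.
From mathcomp Require Import all_boot.
Set Implicit Arguments. Unset Strict Implicit. Unset Printing Implicit Defensive.

Section Pajor.
Variable X : finType.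
Implicit Types (D : {set {set X}}) (U Y Z d e : {set X}).

Lemma shatteredP D Y :
  reflect (forall Z, Z \subset Y -> exists2 d, d \in D & d :&: Y = Z) (shattered D Y).
Proof.
rewrite /shattered; apply: (iffP eqP) => [H Z sZY | H].
- have: Z \in powerset Y by rewrite powersetE.
  rewrite -H => /imsetP [d dD ->]. by exists d.
- apply/setP => Z; rewrite powersetE. apply/imsetP/idP => [[d dD ->]|sZY].
  + by rewrite /restr subsetIr.
  + by have [d dD <-] := H Z sZY; exists d.
Qed.

Lemma shattered_sub D Y U : shattered D Y -> (forall d, d \in D -> d \subset U) -> Y \subset U.
Proof.
move/shatteredP => /(_ Y (subxx Y)) [d dD dY] hD.
by apply: subset_trans (hD d dD); rewrite -dY subsetIl.
Qed.

Lemma pajor0 D : (forall d, d \in D -> d \subset set0) -> #|D| <= #|[set Y | shattered D Y]|.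
Proof.
move=> hD; case: (set_0Vmem D) => [->|[d dD]]; first by rewrite cards0.
have h1 : #|D| <= 1.
  rewrite -(cards1 (set0 : {set X})); apply: subset_leq_card; apply/subsetP => e eD.
  by rewrite inE; have := hD e eD; rewrite subset0.
apply: (leq_trans h1); rewrite card_gt0; apply/set0Pn; exists set0.
rewrite inE; apply/shatteredP => Z; rewrite subset0 => /eqP ->.
by exists d => //; rewrite setI0.
Qed.

Lemma pajor_gen n : forall U D, #|U| <= n -> (forall d, d \in D -> d \subset U) ->
  #|D| <= #|[set Y | shattered D Y]|.
Proof.
elim: n => [|n IH] U D hU hD.
  apply: pajor0 => d /hD; move: hU; rewrite leqn0 => /eqP/cards0_eq ->; done.
case: (set_0Vmem U) => [U0|[x xU]]; first by apply: pajor0 => d /hD; rewrite U0.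
set U' := U :\ x.
have hU' : #|U'| <= n by move: hU; rewrite (cardsD1 x U) xU.
set P := [set d : {set X} | x \in d].
set Dx := D :&: P. set Dn := D :\: P.
set Dx' := [set d :\ x | d in Dx].
set D0 := Dn :|: Dx'. set D1 := Dn :&: Dx'.
have hcount : #|D| = #|D0| + #|D1|.
  rewrite cardsUI -(cardsID P D) addnC; congr (_ + _).
  rewrite card_in_imset // => d d'; rewrite !inE => /andP [_ xd] /andP [_ xd'] E.
  by rewrite -(setD1K xd) -(setD1K xd') E.
have hDn : forall d, d \in Dn -> d \subset U'.
  move=> d; rewrite !inE => /andP [xd dD]; rewrite subsetD1 xd hD //.
have hD0 : forall d, d \in D0 -> d \subset U'.
  move=> d; rewrite inE => /orP [/hDn //|/imsetP [e]]; rewrite !inE => /andP [eD xe] ->.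
  by rewrite setSD // hD.
have hD1 : forall d, d \in D1 -> d \subset U'.
  by move=> d; rewrite inE => /andP [/hDn].
have IH0 := IH U' D0 hU' hD0.
have IH1 := IH U' D1 hU' hD1.
have xnU' : forall Y, Y \subset U' -> x \notin Y.
  by move=> Y /subsetP sY; apply/negP => /sY; rewrite !inE eqxx.
have sh0 : forall Y, shattered D0 Y -> shattered D Y /\ x \notin Y.
  move=> Y shY; have xY := xnU' _ (shattered_sub shY hD0); split=> //.
  apply/shatteredP => Z sZ; have [e eD0 eZ] := shatteredP _ _ shY Z sZ.
  move: eD0; rewrite inE => /orP [|/imsetP [d]].
    by rewrite inE => /andP [_ eD]; exists e.
  rewrite inE => /andP [dD _] ede; exists d => //; rewrite -eZ ede.
  apply/setP => z; rewrite !inE; case: (z =P x) => [->|] //=.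
  by rewrite (negbTE xY) andbF.
have sh1 : forall Y, shattered D1 Y -> shattered D (x |: Y) /\ x \notin Y.
  move=> Y shY; have xY := xnU' _ (shattered_sub shY hD1); split=> //.
  apply/shatteredP => Z sZ.
  have sZ' : Z :\ x \subset Y.
    apply/subsetP => z; rewrite !inE => /andP [zx zZ].
    by have := subsetP sZ z zZ; rewrite !inE (negbTE zx).
  have [e eD1 eZ] := shatteredP _ _ shY _ sZ'.
  move: eD1; rewrite !inE => /andP [/andP [xe eD] /imsetP [d]].
  rewrite !inE => /andP [dD xd] ede.
  have de : d = x |: e by rewrite ede setD1K.
  case xZ: (x \in Z).
    exists d => //; rewrite de; apply/setP => z; move/setP: eZ => /(_ z).
    rewrite !inE; case: (z =P x) => [->|] //= _; by rewrite xZ.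
  exists e => //; apply/setP => z; move/setP: eZ => /(_ z).
  rewrite !inE; case: (z =P x) => [->|] //= _; by rewrite (negbTE xe) xZ.
set S := [set Y | shattered D Y].
set S0 := [set Y | shattered D0 Y].
set S1 := [set Y | shattered D1 Y].
have cS1 : #|[set x |: Y | Y in S1]| = #|S1|.
  rewrite card_in_imset // => Y Y'; rewrite !inE => /sh1 [_ xY] /sh1 [_ xY'] E.
  by rewrite -(setU1K xY) -(setU1K xY') E.
have l0 : #|S0| <= #|S :\: P|.
  apply: subset_leq_card; apply/subsetP => Y; rewrite !inE => /sh0 [-> ->]; done.
have l1 : #|[set x |: Y | Y in S1]| <= #|S :&: P|.
  apply: subset_leq_card; apply/subsetP => Y' /imsetP [Y]; rewrite !inE => /sh1 [sh _] ->.
  by rewrite sh !inE eqxx.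
rewrite hcount -(cardsID P S) (addnC #|S :&: P|); apply: leq_add.
  exact: leq_trans IH0 l0.
by apply: leq_trans IH1 _; rewrite -cS1.
Qed.

Lemma pajor D : #|D| <= #|[set Y | shattered D Y]|.
Proof. by apply: (@pajor_gen #|[set: X]| setT) => // d _; apply: subsetT. Qed.

End Pajor.

Section Rep.
Variable X : finType.
Variable C : {set {set X}}.
Variable r : {set X} -> {set X}.
Hypothesis rep : representation_map C r.
Implicit Types (Y Z T V W d e c : {set X}).

Lemma nc_eq d d' W : d \in C -> d' \in C -> r d :|: r d' \subset W ->
  d :&: W = d' :&: W -> d = d'.
Proof.
case: rep => _ _ nc dC d'C sW E; apply/eqP; apply: contraT => dd'.
have := nc d d' dC d'C dd'; rewrite /restr.
have -> : d :&: (r d :|: r d') = (d :&: W) :&: (r d :|: r d').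
  by rewrite -setIA (setIidPr sW).
have -> : d' :&: (r d :|: r d') = (d' :&: W) :&: (r d :|: r d').
  by rewrite -setIA (setIidPr sW).
by rewrite E eqxx.
Qed.

Lemma lemmaU W c : c \in C ->
  exists2 d, d \in C & (r d \subset W) /\ d :&: W = c :&: W.
Proof.
move=> cC; have [rinj rimg nc] := rep.
set R := [set d in C | r d \subset W].
set CW := [set d :&: W | d in C].
set trR := [set d :&: W | d in R].
have h1 : #|trR| = #|R|.
  rewrite card_in_imset // => d d'; rewrite !inE => /andP [dC sd] /andP [d'C sd'] E.
  by apply: (nc_eq dC d'C _ E); rewrite subUset sd sd'.
have h2 : #|R| = #|[set Y in shattered_sets C | Y \subset W]|.
  rewrite -(card_in_imset (f := r) (D := mem R)); last first.
    by move=> d d'; rewrite !inE => /andP [dC _] /andP [d'C _]; apply: rinj.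
  apply: eq_card => Y; rewrite !inE; apply/imsetP/andP => [[d]|[YX YW]].
    rewrite inE => /andP [dC sd] ->; split=> //.
    have : r d \in shattered_sets C by rewrite -rimg imset_f.
    by rewrite inE.
  have : Y \in shattered_sets C by rewrite inE.
  rewrite -rimg => /imsetP [d dC E]; exists d => //.
  by rewrite inE dC -E.
have h3 := pajor CW.
have h4 : [set Y | shattered CW Y] \subset [set Y in shattered_sets C | Y \subset W].
  apply/subsetP => Y; rewrite !inE => shY.
  have YW : Y \subset W.
    apply: (shattered_sub shY) => e /imsetP [d _ ->]; exact: subsetIr.
  rewrite YW andbT; apply/shatteredP => Z sZ.
  have [e] := shatteredP _ _ shY Z sZ; move=> /imsetP [d dC ->] E; exists d => //.
  by rewrite -E -setIA (setIidPr YW).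
have E : trR == CW.
  rewrite eqEcard; apply/andP; split.
    apply/subsetP => e /imsetP [d]; rewrite inE => /andP [dC _] ->; apply/imsetP; by exists d.
  apply: (leq_trans h3); apply: (leq_trans (subset_leq_card h4)); by rewrite -h2 -h1.
have : c :&: W \in trR by rewrite (eqP E); apply/imsetP; exists c.
move=> /imsetP [d]; rewrite inE => /andP [dC sd] cd.
by exists d.
Qed.

End Rep.

Section Cubes.
Variable X : finType.
Implicit Types (Y Z T V W d e c : {set X}).

Lemma mem_cube T Y d : [disjoint T & Y] -> (d \in cube T Y) = (d :\: Y == T).
Proof.
move=> dTY; apply/imsetP/eqP => [[Z]|dT].
  rewrite powersetE => sZ ->; rewrite setDUl (setDidPl dTY).
  have /eqP -> : Z :\: Y == set0 by rewrite setD_eq0.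
  by rewrite setU0.
exists (d :&: Y); first by rewrite powersetE subsetIr.
by rewrite -dT setUC setID.
Qed.

Lemma card_cube T Y : #|cube T Y| <= 2 ^ #|Y|.
Proof. by rewrite -card_powerset leq_imset_card. Qed.

Lemma disj_setD c Y : [disjoint c :\: Y & Y].
Proof. by rewrite disjoints_subset setDE subsetIr. Qed.

End Cubes.

Section C2.
Variable X : finType.
Variable C : {set {set X}}.
Variable r : {set X} -> {set X}.
Hypothesis rep : representation_map C r.
Implicit Types (Y Z T V W d e c : {set X}).

Lemma sink_char T Y d : is_cube T Y -> cube T Y \subset C -> d \in cube T Y ->
  (sink r (cube T Y) d <-> r d :&: Y = set0).
Proof.
move=> dTY sC dQ; have dC := subsetP sC d dQ.
have dT : d :\: Y = T by apply/eqP; rewrite -mem_cube.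
split.
- move=> [_ hs]; apply/eqP; apply: contraT => /set0Pn [y]; rewrite inE => /andP [yr yY].
  have [e eC [re ed]] := lemmaU rep (~: [set y]) dC.
  have ed' : forall z, z != y -> (z \in e) = (z \in d).
    by move=> z zy; move/setP: ed => /(_ z); rewrite !inE zy !andbT.
  have yre : y \notin r e by apply/negP => /(subsetP re); rewrite !inE eqxx.
  have ned : (y \in e) != (y \in d).
    apply/negP => /eqP E; move: yre; suff -> : e = d by rewrite yr.
    by apply/setP => z; case: (z =P y) => [->|/eqP] //; apply: ed'.
  have eQ : e \in cube T Y.
    rewrite mem_cube //; apply/eqP; rewrite -dT; apply/setP => z; rewrite !inE.
    by case: (z =P y) => [->|/eqP zy]; [rewrite yY | rewrite ed'].
  case: (hs e eQ); exists y; split; last by rewrite inE yr yre.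
  apply/setP => z; rewrite !inE; case: (z =P y) => [->|/eqP zy].
    by move: ned; case: (y \in e); case: (y \in d).
  by rewrite ed' // andNb.
- move=> E; split=> // c' c'Q [x [hx]]; rewrite inE => /andP [xr' xr].
  have c'T : c' :\: Y = T by apply/eqP; rewrite -mem_cube.
  have xY : x \in Y.
    apply: contraT => xY; move/setP: hx => /(_ x); rewrite !inE eqxx.
    move/setP: dT => /(_ x); move/setP: c'T => /(_ x); rewrite !inE xY /= => -> ->.
    by rewrite andNb.
  by move/setP: E => /(_ x); rewrite !inE xr xY.
Qed.

Lemma C2_main T Y : cube_of C T Y ->
  (exists! c, c \in cube T Y /\ r c :&: Y = set0) /\ (exists! c, sink r (cube T Y) c).
Proof.
move=> /andP [dTY sC].
have TQ : T \in cube T Y by rewrite mem_cube // (setDidPl dTY).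
have TC := subsetP sC T TQ.
have [d dC [rd dT]] := lemmaU rep (~: Y) TC.
have dQ : d \in cube T Y.
  rewrite mem_cube // setDE dT -setDE (setDidPl dTY) //.
have rdY : r d :&: Y = set0.
  by apply/eqP; rewrite setI_eq0 disjoints_subset.
have uniq : forall c, c \in cube T Y /\ r c :&: Y = set0 -> d = c.
  move=> c [cQ rc]; have cC := subsetP sC c cQ.
  apply: (nc_eq rep dC cC (W := ~: Y)).
    rewrite subUset rd /= -disjoints_subset -setI_eq0; exact/eqP.
  by rewrite -!setDE; move: dQ cQ; rewrite !mem_cube // => /eqP -> /eqP ->.
split; exists d; split=> //.
- by apply/(sink_char dTY sC dQ).
- by move=> c hc; apply: uniq; split; [case: hc | apply/(sink_char dTY sC); case: hc].
Qed.

End C2.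

Section C1.
Variable X : finType.
Variable C : {set {set X}}.
Variable r : {set X} -> {set X}.
Hypothesis rep : representation_map C r.
Implicit Types (Y Z T V W d e c : {set X}).

Lemma C1_gen n : forall c Y, c \in C -> Y \subset r c -> #|Y| <= n ->
  cube (c :\: Y) Y \subset C.
Proof.
elim: n => [|n IH] c Y cC Yr hY.
  move: hY; rewrite leqn0 => /eqP/cards0_eq ->; apply/subsetP => d.
  by rewrite mem_cube ?disj_setD // !setD0 => /eqP ->.
set T := c :\: Y.
have dTY : [disjoint T & Y] by apply: disj_setD.
set Q := cube T Y.
set F := Q :&: C.
set A := fun V => [set d in F | r d :&: Y \subset V].
set B := fun V => [set d in F | r d :&: Y == V].
have FQ : forall d, d \in F -> d :\: Y = T.
  by move=> d; rewrite inE mem_cube // => /andP [/eqP ->].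
have FC : forall d, d \in F -> d \in C by move=> d; rewrite inE => /andP [].
have inj : forall V, V \subset Y -> {in A V &, injective (fun d => d :&: V)}.
  move=> V sV d d'; rewrite [d \in A V]inE [d' \in A V]inE.
  move=> /andP [dF dV] /andP [d'F d'V] E.
  apply: (nc_eq rep (FC d dF) (FC d' d'F) (subxx _)).
  apply/setP => z; rewrite !inE.
  case zY: (z \in Y).
    case zr: ((z \in r d) || (z \in r d')); rewrite ?andbF //.
    have zV : z \in V.
      move: zr => /orP [zr|zr].
        by apply: (subsetP dV); rewrite inE zr zY.
      by apply: (subsetP d'V); rewrite inE zr zY.
    by move/setP: E => /(_ z); rewrite !inE zV !andbT => ->.
  move/setP: (FQ d dF) => /(_ z); move/setP: (FQ d' d'F) => /(_ z).
  by rewrite !inE zY /= => -> ->.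
have surj : forall V, V \proper Y -> powerset V \subset [set d :&: V | d in A V].
  move=> V /properP [sV [y yY yV]]; apply/subsetP => Z; rewrite powersetE => sZ.
  set Y' := Y :\ y.
  have hY' : #|Y'| <= n by move: hY; rewrite (cardsD1 y Y) yY.
  have Y'r : Y' \subset r c by apply: subset_trans (subsetDl _ _) Yr.
  have sVY' : V \subset Y' by rewrite subsetD1 sV yV.
  have sZ' : Z \subset Y' by apply: subset_trans sZ sVY'.
  set p := (c :\: Y') :|: Z.
  have pC : p \in C.
    apply: (subsetP (IH c Y' cC Y'r hY')); apply/imsetP; exists Z => //.
    by rewrite powersetE.
  have [d dC [rd dp]] := lemmaU rep (~: Y :|: V) pC.
  have dpz : forall z, z \notin Y -> (z \in d) = (z \in p).
    move=> z zY; move/setP: dp => /(_ z); rewrite !inE zY /= !andbT //.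
  have dpz' : forall z, z \in V -> (z \in d) = (z \in p).
    move=> z zV; move/setP: dp => /(_ z); rewrite !inE zV /= !orbT !andbT //.
  have ZY' := subsetP sZ'. have Y'Y : forall z, z \in Y' -> z \in Y.
    by move=> z; rewrite inE => /andP [].
  have VY' := subsetP sVY'.
  apply/imsetP; exists d.
    rewrite inE; apply/andP; split.
      rewrite inE dC andbT mem_cube //; apply/eqP/setP => z; rewrite !inE.
      case zY: (z \in Y) => //=; rewrite dpz ?zY // !inE.
      have zY' : z \notin Y' by apply/negP => /Y'Y; rewrite zY.
      have zZ : z \notin Z by apply/negP => /ZY'/Y'Y; rewrite zY.
      by rewrite zY andbF /= (negbTE zZ) orbF.
    apply/subsetP => z; rewrite inE => /andP [zr zY].
    by have := subsetP rd z zr; rewrite !inE zY.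
  apply/setP => z; rewrite !inE.
  case zV: (z \in V); last first.
    by rewrite andbF; apply/negP => /(subsetP sZ); rewrite zV.
  rewrite andbT dpz' // !inE; have := VY' z zV; rewrite !inE => -> /=.
  done.
have cardA : forall V, V \proper Y -> #|A V| = 2 ^ #|V|.
  move=> V pV; rewrite -card_powerset -(card_in_imset (inj V (proper_sub pV))).
  congr #|pred_of_set _|.
  apply/eqP; rewrite eqEsubset surj // andbT.
  by apply/subsetP => Z /imsetP [d _ ->]; rewrite powersetE subsetIr.
have part : forall V, #|A V| = \sum_(V' in powerset V) #|B V'|.
  move=> V; rewrite -sum1_card (partition_big (fun d => r d :&: Y) (mem (powerset V))).
    apply: eq_bigr => V' hV'; rewrite sum1dep_card; apply: eq_card => d; rewrite !inE.
    case E: (r d :&: Y == V'); rewrite ?andbF ?andbT //.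
    have : V' \in powerset V by [].
    by rewrite powersetE (eqP E) => ->; rewrite andbT.
  by move=> d; rewrite !inE => /andP [].
have splitsum : forall V, (forall V', V' \proper V -> #|B V'| = 1) ->
    \sum_(V' in powerset V) #|B V'| = #|B V| + (2 ^ #|V|).-1.
  move=> V h1; rewrite (bigD1 V) ?powersetE //=; congr (_ + _).
  rewrite (eq_bigr (fun _ => 1)); last first.
    move=> V' /andP [hV' nV']; apply: h1; rewrite properEneq nV' -powersetE hV' //.
  rewrite sum1dep_card.
  have := cardsD1 V (powerset V); rewrite powersetE subxx card_powerset add1n => ->.
  by rewrite /=; apply: eq_card => x; rewrite !inE andbC.
have Bone : forall m V, #|V| <= m -> V \proper Y -> #|B V| = 1.
  elim=> [|m IHm] V hV pV; have := part V; rewrite cardA // splitsum.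
  - have := expn_gt0 2 #|V|; rewrite /= => h E; apply/eqP.
    by rewrite -(eqn_add2r (2 ^ #|V|).-1) -E add1n prednK.
  - by move=> V' /proper_card; move: hV; rewrite leqn0 => /eqP ->.
  - have := expn_gt0 2 #|V|; rewrite /= => h E; apply/eqP.
    by rewrite -(eqn_add2r (2 ^ #|V|).-1) -E add1n prednK.
  - move=> V' pV'; apply: (IHm V'); last exact: proper_trans pV' pV.
    by have := proper_card pV'; move=> h; rewrite -ltnS (leq_trans h).
have AF : A Y = F by apply/setP => d; rewrite !inE subsetIr andbT.
have cB : c \in B Y.
  rewrite !inE cC andbT (setIidPr Yr) eqxx andbT mem_cube //.
have hF : #|F| = #|B Y| + (2 ^ #|Y|).-1.
  rewrite -AF part splitsum // => V' pV'; exact: (Bone #|V'|).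
have hB : 0 < #|B Y| by rewrite card_gt0; apply/set0Pn; exists c.
have hQ : #|Q| <= #|F|.
  apply: (leq_trans (card_cube T Y)); rewrite hF.
  have := expn_gt0 2 #|Y|; rewrite /= => h.
  by rewrite -(prednK h) -(prednK hB) addSn ltnS leq_addl.
have FQ' : F == Q by rewrite eqEcard subsetIl hQ.
by apply/setIidPl; rewrite -/F (eqP FQ').
Qed.
End C1.

Theorem corollary6p2 (X : finType) (C : {set {set X}}) (r : {set X} -> {set X}) :
  ample C -> representation_map C r ->
  (* (C1) *)
  (forall c, c \in C -> cube (c :\: r c) (r c) \subset C) /\
  (* (C2) *)
  (forall T Y, cube_of C T Y ->
     (exists! c, c \in cube T Y /\ r c :&: Y = set0) /\
     (exists! c, sink r (cube T Y) c) /\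
     USO_on r T Y).
Proof.
move=> _ rep; split.
- move=> c cC; exact: (C1_gen rep (n := #|r c|) cC (subxx _) (leqnn _)).
- move=> T Y hc; have [h1 h2] := C2_main rep hc; split=> //; split=> //.
  move=> T' Y' hc' sub; apply: (proj2 (C2_main rep _)).
  rewrite /cube_of hc' /=; apply: subset_trans sub _; by case/andP: hc.
Qed.
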